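(* Let $A\in\mathbb{R}^{n\times n}$ be such that $A-I$ is an irreducible singular $M$-matrix, let $v>0$ satisfy $(A^T-I)v=0$, and let $b\in\mathbb{R}^n$ satisfy $v^Tb=0$. Then the equation $Ax-|x|=b$ has infinitely many solutions.
   Context: $|x|$ is the componentwise absolute value. A $Z$-matrix is a real square matrix whose off-diagonal entries are all nonpositive; any $Z$-matrix can be written $sI-B$ with $B\ge 0$ entrywise, and it is a singular $M$-matrix if $s=\rho(B)$, where $\rho$ is spectral radius. A square matrix $M$ is reducible if there is a permutation matrix $P$ with $P^TMP=\begin{bmatrix}M_{11}&M_{12}\\0&M_{22}\end{bmatrix}$ where $M_{11},M_{22}$ are square (nonempty) blocks; it is irreducible otherwise. $v>0$ means all components of $v$ are positive. *)

(* Defs.v *)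
From HB Require Import structures.
From mathcomp Require Import all_boot all_order all_algebra perm.
From mathcomp Require Import complex.
Set Implicit Arguments. Unset Strict Implicit. Unset Printing Implicit Defensive.
Import Order.TTheory GRing.Theory Num.Theory.
Local Open Scope ring_scope.

Section Defs.
Variable R : rcfType.

Definition mx_nonneg m p (B : 'M[R]_(m, p)) : Prop := forall i j, 0 <= B i j.

Definition cabs n (x : 'cV[R]_n) : 'cV[R]_n := \col_i `|x i 0|.

Definition cpos n (v : 'cV[R]_n) : Prop := forall i, 0 < v i 0.

Definition ceigen n (B : 'M[R]_n) (l : R[i]) : Prop :=
  eigenvalue (map_mx (fun r : R => Complex r 0) B) l.

Definition is_spectral_radius n (B : 'M[R]_n) (s : R) : Prop :=
  (exists2 l, ceigen B l & `|l| = Complex s 0) /\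
  (forall l, ceigen B l -> `|l| <= Complex s 0).

Definition Zmatrix n (M : 'M[R]_n) : Prop := forall i j, i != j -> M i j <= 0.

Definition singular_Mmatrix n (M : 'M[R]_n) : Prop :=
  exists s (B : 'M[R]_n),
    [/\ mx_nonneg B, M = s%:M - B & is_spectral_radius B s].

(* the permutation matrix P with P^T M P = \matrix_(i,j) M (s i) (s j) *)
Definition reducible n (M : 'M[R]_n) : Prop :=
  exists (s : 'S_n) (k : nat), [/\ (0 < k)%N, (k < n)%N &
    forall i j : 'I_n, (k <= i)%N -> (j < k)%N ->
      ((perm_mx s)^T *m M *m perm_mx s) i j = 0].

Definition irreducible_mx n (M : 'M[R]_n) : Prop := ~ reducible M.
End Defs.

(* Main.v *)
Require Import Defs.
From HB Require Import structures.
From mathcomp Require Import all_boot all_order all_algebra perm.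
From mathcomp Require Import complex classical_sets cardinality reals.
From mathcomp Require Import zify lra.
Import Order.TTheory GRing.Theory Num.Theory.
Local Open Scope ring_scope.

Section Aux.
Variables (R : realType) (n : nat) (B : 'M[R]_n) (s : R) (v : 'cV[R]_n).
Hypotheses (hB : mx_nonneg B) (hv : cpos v) (hBv : B^T *m v = s *: v)
  (hirr : irreducible_mx (s%:M - B)).

Lemma s_ge0 (i : 'I_n) : 0 <= s.
Proof.
have := congr1 (fun X : 'M[R]_(n,1) => X i 0) hBv => /=; rewrite !mxE => e.
have : 0 <= s * v i 0.
  rewrite -e; apply: sumr_ge0 => j _; rewrite mxE; apply: mulr_ge0 => //.
  exact: ltW.
by rewrite pmulr_lge0.
Qed.

Lemma L1 (w : 'cV[R]_n) : B *m w = s *: w -> B *m cabs w = s *: cabs w.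
Proof.
move=> hw.
set d := B *m cabs w - s *: cabs w.
have dge0 : forall i, 0 <= d i 0.
  move=> i; rewrite /d !mxE subr_ge0.
  have -> : s * `|w i 0| = `|(B *m w) i 0|.
    by rewrite hw mxE normrM (ger0_norm (s_ge0 i)).
  rewrite mxE; apply: le_trans (ler_norm_sum _ _ _) _; apply: ler_sum => j _.
  by rewrite normrM (ger0_norm (hB _ _)) /cabs mxE.
have vd : v^T *m d = 0.
  have eB : v^T *m B = s *: v^T by rewrite -[B]trmxK -trmx_mul hBv linearZ.
  by rewrite /d mulmxBr mulmxA eB -scalemxAl -scalemxAr subrr.
have hs : \sum_i v i 0 * d i 0 = 0.
  transitivity ((v^T *m d) 0 0); last by rewrite vd mxE.
  by rewrite mxE; apply: eq_bigr => i _; rewrite [v^T _ _]mxE.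
have d0 : forall i, d i 0 = 0.
  move=> i.
  have nn : forall j, xpredT j -> 0 <= v j 0 * d j 0.
    by move=> j _; apply: mulr_ge0 => //; exact: ltW.
  have := psumr_eq0P nn hs (i:=i) isT.
  by move/eqP; rewrite mulf_eq0 (gt_eqF (hv i)) /= => /eqP.
apply/matrixP => i j; rewrite (ord1 j); apply: subr0_eq.
by have := d0 i; rewrite /d !mxE.
Qed.

Lemma L2 (z : 'cV[R]_n) : (forall i, 0 <= z i 0) -> B *m z = s *: z ->
  forall j0, z j0 0 = 0 -> z = 0.
Proof.
move=> z0 hz j0 zj0.
apply/eqP; apply/negPn/negP => zn0; apply: hirr.
pose a := fun i : 'I_n => z i 0 != 0.
have key : forall i j, ~~ a i -> a j -> B i j = 0.
  move=> i j /negPn/eqP zi aj.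
  have e : \sum_k B i k * z k 0 = 0.
    transitivity ((B *m z) i 0); first by rewrite mxE.
    by rewrite hz mxE zi mulr0.
  have nn : forall k, xpredT k -> 0 <= B i k * z k 0.
    by move=> k _; apply: mulr_ge0.
  have := psumr_eq0P nn e (i:=j) isT.
  by move/eqP; rewrite mulf_eq0 (negbTE aj) orbF => /eqP.
pose s1 := [seq x <- enum 'I_n | a x].
pose s2 := [seq x <- enum 'I_n | predC a x].
have pe : perm_eq (s1 ++ s2) (ord_tuple n).
  by rewrite val_ord_tuple perm_filterC.
case/tuple_permP: pe => p hp.
have hsz : size (s1 ++ s2) = n by rewrite hp size_tuple.
have hnth : forall i : 'I_n, nth i (s1 ++ s2) i = p i.
  by move=> i; rewrite hp -tnth_nth tnth_mktuple tnth_ord_tuple.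
pose k := size s1.
have pa : forall i : 'I_n, (i < k)%N -> a (p i).
  move=> i ik; rewrite -hnth nth_cat ik.
  by have := mem_nth i ik; rewrite mem_filter => /andP[].
have pna : forall i : 'I_n, (k <= i)%N -> ~~ a (p i).
  move=> i ki; rewrite -hnth nth_cat ltnNge ki /=.
  have h : (i - k < size s2)%N.
    have := ltn_ord i; have := hsz; rewrite size_cat -/k; lia.
  by have := mem_nth i h; rewrite mem_filter => /andP[].
have [i ai] : exists i, a i.
  apply/existsP; apply: contraNT zn0 => /existsPn h.
  apply/eqP/matrixP => i j; rewrite (ord1 j) mxE.
  by have := h i; rewrite /a => /negbNE/eqP.
have nj0 : ~~ a j0 by rewrite /a zj0 eqxx.
exists (p^-1)%g, k; split.
- rewrite /k size_filter -has_count; apply/hasP; exists i => //.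
  by rewrite mem_enum.
- have c1 := count_predC a (enum 'I_n).
  have c2 : (0 < count (predC a) (enum 'I_n))%N.
    by rewrite -has_count; apply/hasP; exists j0 => //; rewrite mem_enum.
  rewrite size_enum_ord in c1.
  have e1 : k = count a (enum 'I_n) by rewrite /k size_filter.
  rewrite e1; lia.
- move=> i' j' ki jk.
  rewrite tr_perm_mx invgK -row_permE -col_permE !mxE.
  have pjn : (p i' == p j') = false.
    apply/negbTE/eqP => e; have := pna i' ki; rewrite e pa //.
  by rewrite pjn mulr0n key ?pna ?pa // subrr.
Qed.

Lemma L3 (j0 : 'I_n) (w : 'cV[R]_n) : (s%:M - B) *m w = 0 -> w j0 0 = 0 -> w = 0.
Proof.
move=> hw wj0.
have hBw : B *m w = s *: w.
  by apply/esym/subr0_eq; rewrite -mul_scalar_mx -mulmxBl.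
have := @L2 (cabs w) _ (L1 _ hBw) j0 _.
move=> /(_ _ _) h.
have {}h := h (fun i => ltac:(by rewrite mxE normr_ge0)) (ltac:(by rewrite mxE wj0 normr0)).
apply/matrixP => i j; rewrite (ord1 j) mxE.
by have := congr1 (fun X : 'cV[R]_n => X i 0) h; rewrite !mxE => /normr0_eq0.
Qed.

Lemma hMv : (s%:M - B)^T *m v = 0.
Proof. by rewrite linearB /= tr_scalar_mx mulmxBl mul_scalar_mx hBv subrr. Qed.

Lemma kerT_col (r : 'I_n) : (s%:M - B) *m (row r (kermx (s%:M - B)^T))^T = 0.
Proof.
by rewrite -[(s%:M - B) *m _]trmxK trmx_mul !trmxK -row_mul mulmx_ker row0 trmx0.
Qed.

Lemma L4 : (0 < n)%N -> exists u : 'cV[R]_n, cpos u /\ (s%:M - B) *m u = 0.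
Proof.
move=> n0.
set M := s%:M - B.
have hvM : v^T *m M = 0 by rewrite -[M]trmxK -trmx_mul hMv trmx0.
have vn0 : v^T != 0.
  apply/eqP => e; have := congr1 (fun X : 'rV[R]_n => X 0 (Ordinal n0)) e.
  by rewrite !mxE => e'; have := hv (Ordinal n0); rewrite e' ltxx.
have kM : kermx M != 0.
  apply: contraNneq vn0 => e.
  have : (v^T <= kermx M)%MS by apply/sub_kermxP.
  by rewrite e submx0.
have kMT : kermx M^T != 0.
  by move: kM; rewrite !kermx_eq0 /row_free mxrank_tr.
have [r hr] : exists r : 'I_n, row r (kermx M^T) != 0.
  apply/existsP; apply: contraNT kMT => /existsPn h.
  by apply/eqP/row_matrixP => i; rewrite row0; apply/eqP/negbNE/h.
pose w := (row r (kermx M^T))^T.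
have hw : M *m w = 0 by exact: kerT_col.
have hBw : B *m w = s *: w.
  by apply/esym/subr0_eq; rewrite -mul_scalar_mx -mulmxBl.
exists (cabs w); split.
- move=> i; rewrite mxE normr_gt0; apply/eqP => wi0.
  have w0 := L3 _ _ hw wi0.
  by move: hr; rewrite -[row _ _]trmxK -/w w0 trmx0 eqxx.
- by rewrite /M mulmxBl mul_scalar_mx (L1 _ hBw) subrr.
Qed.

Lemma L5 (u : 'cV[R]_n) (j0 : 'I_n) (b : 'cV[R]_n) : cpos u ->
  (s%:M - B) *m u = 0 -> v^T *m b = 0 -> exists x0, (s%:M - B) *m x0 = b.
Proof.
move=> hu0 hu hvb.
set M := s%:M - B.
have sK : (kermx M^T <= u^T)%MS.
  apply/row_subP => r.
  pose w := (row r (kermx M^T))^T.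
  have hw : M *m w = 0 by exact: kerT_col.
  have ew : row r (kermx M^T) = w^T by rewrite trmxK.
  rewrite ew; clearbody w.
  pose c := w j0 0 / u j0 0.
  have hw' : M *m (w - c *: u) = 0.
    by rewrite mulmxBr -scalemxAr hu scaler0 hw subrr.
  have := L3 _ _ hw'.
  have z0 : (w - c *: u) j0 0 = 0.
    by rewrite !mxE /c divfK ?subrr // gt_eqF ?hu0.
  move=> /(_ j0 z0) /subr0_eq e.
  rewrite e linearZ /=.
  by apply: scalemx_sub; exact: submx_refl.
have rk1 : (n - \rank M^T <= 1)%N.
  by rewrite -mxrank_ker; apply: leq_trans (mxrankS sK) (rank_leq_row _).
have sMv : (M^T <= kermx v)%MS by apply/sub_kermxP; exact: hMv.
have vn0 : \rank v != 0%N.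
  rewrite mxrank_eq0; apply/eqP => e.
  by have := hu0 j0; have := hv j0; rewrite e mxE ltxx.
have eqs : (kermx v <= M^T)%MS.
  rewrite -(mxrank_leqif_sup sMv).2 eqn_leq mxrankS //=.
  have := rank_leq_row M^T; have := rank_leq_col v.
  rewrite mxrank_ker; move: vn0 rk1; rewrite -lt0n.
  move: (\rank v) (\rank M^T) => x y; lia.
have sb : (b^T <= M^T)%MS.
  apply: submx_trans eqs; apply/sub_kermxP.
  by rewrite -[v]trmxK -trmx_mul hvb trmx0.
case/submxP: sb => D hD; exists D^T.
by rewrite -[M]trmxK -trmx_mul -hD trmxK.
Qed.
End Aux.

Local Open Scope classical_set_scope.
Lemma inf_of_inj T (A : set T) (f : nat -> T) : injective f -> (forall m, A (f m)) -> infinite_set A.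
Proof.
move=> fi fA; apply: (@sub_infinite_set _ (f @` setT)).
  by move=> _ [m _ <-].
move=> fin; apply: infinite_nat; apply: card_le_finite fin.
have := @inj_card_eq _ _ [set: nat] f (in2W fi).
by rewrite card_eq_sym card_eqPle => -[].
Qed.
Local Close Scope classical_set_scope.


Theorem proposition4p3 (R : realType) (n : nat) (A : 'M[R]_n) (v b : 'cV[R]_n) :
  singular_Mmatrix (A - 1%:M) ->
  irreducible_mx (A - 1%:M) ->
  cpos v ->
  (A^T - 1%:M) *m v = 0 ->
  v^T *m b = 0 ->
  infinite_set [set x : 'cV[R]_n | A *m x - cabs x = b].
Proof.
move=> [s [B [hB hM hsr]]] hirr hv hAv hvb.
have n0 : (0 < n)%N.
  case: hsr => -[l hl _] _; rewrite /ceigen /eigenvalue /eigenspace in hl.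
  rewrite lt0n; apply/negP => /eqP n00; move/eqP: hl; apply.
  apply/matrixP => i; exfalso; move: (nat_of_ord i) (ltn_ord i) => k.
  by rewrite n00.
pose j0 := Ordinal n0.
rewrite hM in hirr.
have hBv : B^T *m v = s *: v.
  apply/esym/subr0_eq; rewrite -mul_scalar_mx -mulmxBl -tr_scalar_mx -linearB /=.
  by rewrite -hM linearB /= trmx1.
have [u [hu0 hu]] := @L4 _ _ _ _ _ hB hv hBv hirr n0.
have [x0 hx0] := @L5 _ _ _ _ _ hB hv hBv hirr u j0 b hu0 hu hvb.
pose c := \sum_i `|x0 i 0| / u i 0.
pose f := fun m : nat => x0 + (c + m%:R) *: u.
apply: (@inf_of_inj _ _ f).
- move=> m1 m2 /(congr1 (fun X : 'cV[R]_n => X j0 0)); rewrite !mxE.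
  move=> /addrI /(mulIf (negbT (gt_eqF (hu0 j0)))) /addrI /eqP.
  by rewrite eqr_nat => /eqP.
- move=> m /=.
  have fpos : cabs (f m) = f m.
    apply/matrixP => i j; rewrite (ord1 j) mxE ger0_norm // /f !mxE.
    have ci : `|x0 i 0| <= c * u i 0.
      rewrite -ler_pdivrMr ?hu0 // /c (bigD1 i) //= lerDl.
      apply: sumr_ge0 => k _; apply: divr_ge0 => //; exact: ltW.
    have h1 : 0 <= m%:R * u i 0 by apply: mulr_ge0 => //; exact: ltW.
    have h2 : - `|x0 i 0| <= x0 i 0.
      by have := ler_norm (- x0 i 0); rewrite normrN lerNl.
    rewrite mulrDl; lra.
  rewrite fpos -[X in _ - X]mul1mx -mulmxBl hM /f mulmxDr -scalemxAr hu scaler0.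
  by rewrite addr0 hx0.
Qed.
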